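(* Assume the perfect setting and the prior coverage condition $\sup_{z,z'\in\mathcal{Z}}\mathcal{P}_{\mathcal{Z}}(z')/\mathcal{P}_{\mathcal{Z}}(z)\le c_{\mathcal{Z}}$. Let $\delta\in(0,1)$ and let $z\in\mathcal{Z}$ be the ground-truth latent variable. Then for all $(h,t)\in[H]\times[T]$, with probability at least $1-\delta$, $$\sum_{z'\in\mathcal{Z}}\sum_{i\in[t]}D_{\rm H}^2\big(\mathbb{P}^{\pi^i}_z(\breve\tau^i_{h/t}),\mathbb{P}^{\pi^i}_{z'}(\breve\tau^i_{h/t})\big)\cdot\mathbb{P}_{\mathcal{D}}(z'\mid\mathtt{pt}_h^t)\le2\log(c_{\mathcal{Z}}|\mathcal{Z}|/\delta),$$ where $\breve\tau^i_{h/t}=\tau_H$ for $i<t$ and $\breve\tau^t_{h/t}=\tau_h$.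
   Context: High-level model: finite latent set $\mathcal{Z}$; spaces $\mathcal{S},\mathcal{O},\mathcal{G},\Omega$; horizon $H$; for each $z$ transitions $\mathbb{P}_{z,h}(s'\mid s,g)$, emission $\mathbb{O}(o\mid s)$, initial distribution $\rho$. Trajectories $\tau_h=(o_1,g_1,\dots,o_h)$; $\mathbb{P}^\pi_z(\tau_h)$ is the law of $\tau_h$ under latent $z$ and policy $\pi$. Pretraining distribution: with priors $\mathcal{P}_{\mathcal{Z}},\mathcal{P}_\Omega$, behavior policy $\pi^b$ and optimal policies $\pi^*_z$, $\mathbb{P}_{\mathcal{D}}(D)=\mathcal{P}_{\mathcal{Z}}(z)\prod_t\mathcal{P}_\Omega(\omega^t)\prod_h\pi^*_{z,h}(g^{t,*}_h\mid\tau_h^t,\omega^t)\mathbb{O}(o_h^t\mid s_h^t)\pi^b_h(g_h^t\mid\tau_h^t,\omega^t)\mathbb{P}_{z,h}(s^t_{h+1}\mid s_h^t,g_h^t)$; $\mathbb{P}_{\mathcal{D}}(z'\mid\mathtt{pt}_h^t)$ is the posterior of $z'$ under $\mathbb{P}_{\mathcal{D}}$ given the prompt $\mathtt{pt}_h^t=\mathcal{H}_t\cup\{\omega^t,\tau_h^t\}$, with $\mathcal{H}_t=\{\omega^i,\tau_H^i\}_{i<t}$. Perfect setting: the LLM's output is $\mathtt{LLM}(\cdot\mid\mathtt{pt}_h^t)=\mathbb{P}_{\mathcal{D}}(g^{t,*}_h=\cdot\mid\mathtt{pt}_h^t)$ and observations are generated by the true $\mathbb{O}$. The data $\mathcal{H}_t,\tau_h^t$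 are generated in the environment $z$ by the Planner, which in each episode $i$, independently with probability $\epsilon$, uses a fixed exploration policy $\pi_{\mathtt{exp}}$ for the whole episode and otherwise draws $g_h^i\sim\mathtt{LLM}(\cdot\mid\mathtt{pt}_h^i)$; $\pi^i$ denotes the policy used in episode $i$. $D_{\rm H}^2(P,Q)=\tfrac12\mathbb{E}_P[(\sqrt{dQ/dP}-1)^2]$. *)

(* Defs.v *)
From mathcomp Require Import all_boot all_order all_algebra.
From mathcomp Require Import reals exp.
Set Implicit Arguments. Unset Strict Implicit. Unset Printing Implicit Defensive.
Import Order.TTheory GRing.Theory Num.Theory.
Local Open Scope ring_scope.

Section Model.
Variable R : realType.
Variables (Z S O G W : finType).

(* A trajectory tau_h = (o_1,g_1,...,o_{h-1},g_{h-1},o_h) is encoded as the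
   pair (list of the h-1 pairs (o_k,g_k), current observation o_h). *)
Definition Traj := (seq (O * G) * O)%type.
(* A (history dependent, per-step) policy: pi_h(g | tau_h); the step h is
   determined by the length of tau_h. *)
Definition policy := Traj -> G -> R.

Definition isdist (T : finType) (f : T -> R) :=
  (forall x, 0 <= f x) /\ \sum_(x : T) f x = 1.

Variable H : nat.
Variable rho : S -> R.
Variable Obs : S -> O -> R.
Variable Ptr : Z -> nat -> S -> G -> S -> R.   (* P_{z,h}(s' | s, g), h 0-based *)

(* forward recursion: fwd ... pre alpha rest o s is the joint probability of
   observing prefix pre ++ rest followed by o, and being in state s. *)
Fixpoint fwd (z : Z) (pi : policy) (pre : seq (O * G)) (alpha : S -> R)
    (rest : seq (O * G)) (o : O) : S -> R :=
  match rest with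
  | [::] => fun s => alpha s * Obs s o
  | (o1, g1) :: r =>
      fwd z pi (rcons pre (o1, g1))
        (fun s' => \sum_(s : S) alpha s * Obs s o1 * pi (pre, o1) g1
                                * Ptr z (size pre) s g1 s') r o
  end.

Definition law (z : Z) (pi : policy) (tau : Traj) : R :=
  \sum_(s : S) fwd z pi [::] rho tau.1 tau.2 s.

(* squared Hellinger distance between two laws on trajectories tau_{n+1}
   (n action-observation pairs followed by one observation) *)
Definition hell2 (n : nat) (P Q : Traj -> R) : R :=
  2^-1 * \sum_(p : n.-tuple (O * G)) \sum_(o : O)
           (Num.sqrt (P (tval p, o)) - Num.sqrt (Q (tval p, o))) ^+ 2.

Variable PZ : Z -> R.
Variable PW : W -> R.
Variable pib : W -> policy.
Variable pistar : Z -> W -> policy.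

(* P_D(z', pt) for the prompt pt = H_t u {omega, tau}, H_t = hist: the
   marginal of the pretraining distribution (the labels g^* and the
   unobserved parts of the dataset summed out). *)
Definition PD_joint (z' : Z) (hist : seq (W * Traj)) (om : W) (tau : Traj) : R :=
  PZ z' * (\prod_(e <- hist) (PW e.1 * law z' (pib e.1) e.2))
        * (PW om * law z' (pib om) tau).

Definition post (z' : Z) hist om tau : R :=
  PD_joint z' hist om tau / \sum_(z'' : Z) PD_joint z'' hist om tau.

(* perfect setting: LLM(g | pt) = P_D(g^* = g | pt) *)
Definition LLM hist om (tau : Traj) (g : G) : R :=
  (\sum_(z' : Z) PD_joint z' hist om tau * pistar z' om tau g)
    / \sum_(z' : Z) PD_joint z' hist om tau.

Variable piexp : policy.
Variable eps : R.

(* a record of a past episode: (omega^i, explore-coin, tau^i_H) *)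
Definition strip (hist : seq (W * bool * Traj)) : seq (W * Traj) :=
  map (fun e => (e.1.1, e.2)) hist.

Definition plan_pol (hist : seq (W * bool * Traj)) (om : W) (b : bool) : policy :=
  if b then piexp else fun tau g => LLM (strip hist) om tau g.

Definition coin (b : bool) : R := if b then eps else 1 - eps.

Fixpoint hsum (z z' : Z) (pre rest : seq (W * bool * Traj)) : R :=
  match rest with
  | [::] => 0
  | e :: r => hell2 H.-1 (law z (plan_pol pre e.1.1 e.1.2))
                         (law z' (plan_pol pre e.1.1 e.1.2))
              + hsum z z' (rcons pre e) r
  end.

(* left-hand side of the bound at (h,t): hist = episodes 1..t-1,
   (om, b, tau) = task, coin and tau^t_h of episode t *)
Definition lhs (z : Z) (h : nat) (hist : seq (W * bool * Traj)) (om : W) (b : bool)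
    (tau : Traj) : R :=
  \sum_(z' : Z)
    (hsum z z' [::] hist
     + hell2 h.-1 (law z (plan_pol hist om b)) (law z' (plan_pol hist om b)))
    * post z' (strip hist) om tau.

(* probability, when the Planner interacts with environment z, that after
   n further complete episodes and h steps of the next one the bound fails *)
Fixpoint fail_prob (z : Z) (h : nat) (bound : R) (n : nat)
    (hist : seq (W * bool * Traj)) : R :=
  match n with
  | 0 =>
    \sum_(om : W) \sum_(b : bool) \sum_(p : h.-1.-tuple (O * G)) \sum_(o : O)
      PW om * coin b * law z (plan_pol hist om b) (tval p, o)
      * (if bound < lhs z h hist om b (tval p, o) then 1 else 0)
  | n'.+1 =>
    \sum_(om : W) \sum_(b : bool) \sum_(p : H.-1.-tuple (O * G)) \sum_(o : O)
      PW om * coin b * law z (plan_pol hist om b) (tval p, o)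
      * fail_prob z h bound n' (rcons hist (om, b, (tval p, o)))
  end.

End Model.

(* Main.v *)
Require Import Defs.
From mathcomp Require Import all_boot all_order all_algebra.
From mathcomp Require Import reals sequences exp.
From mathcomp Require Import ring lra.
Set Implicit Arguments. Unset Strict Implicit. Unset Printing Implicit Defensive.
Import Order.TTheory GRing.Theory Num.Theory.
Local Open Scope ring_scope.

Section Tup.
Variable R : realType.
Lemma sum_tupleS (T : finType) n (F : seq T -> R) :
  \sum_(p : n.+1.-tuple T) F (tval p) =
  \sum_(x : T) \sum_(p : n.-tuple T) F (x :: tval p).
Proof.
rewrite pair_bigA /=.
rewrite (reindex (fun xp : T * n.-tuple T => [tuple of xp.1 :: xp.2])) //=.
exists (fun t : n.+1.-tuple T => (thead t, [tuple of behead t])).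
  move=> [x p] _ /=; congr (_, _); by apply: val_inj.
by move=> t _ /=; rewrite [in RHS](tuple_eta t).
Qed.

Lemma sum_tuple0 (T : finType) (F : seq T -> R) :
  \sum_(p : 0.-tuple T) F (tval p) = F [::].
Proof.
rewrite (eq_bigr (fun _ => F [::])) => [|p _]; last by rewrite tuple0.
by rewrite sumr_const card_tuple expn0.
Qed.
End Tup.

Section Fwd.
Variable R : realType.
Variables (Z S O G : finType).
Variable Obs : S -> O -> R.
Variable Ptr : Z -> nat -> S -> G -> S -> R.
Hypothesis Obs_d : forall s, isdist (Obs s).
Hypothesis Ptr_d : forall z0 k s g, isdist (Ptr z0 k s g).

Definition subpol (pi : policy R O G) :=
  (forall t g, 0 <= pi t g) /\ (forall t, \sum_g pi t g <= 1).

Lemma fwd_ge0 z (pi : policy R O G) pre alpha rest o s :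
  (forall t g, 0 <= pi t g) -> (forall s, 0 <= alpha s) ->
  0 <= fwd Obs Ptr z pi pre alpha rest o s.
Proof.
move=> pi0; elim: rest pre alpha => [|[o1 g1] r IH] pre alpha a0 /=.
  by rewrite mulr_ge0 // (Obs_d s).1.
apply: IH => s'; apply: sumr_ge0 => s0 _.
by rewrite !mulr_ge0 // ?(Obs_d _).1 ?(Ptr_d _ _ _ _).1.
Qed.

Lemma fwd_scale z (pi : policy R O G) pre (a1 a2 : S -> R) c rest o s :
  (forall s, a2 s = c * a1 s) ->
  fwd Obs Ptr z pi pre a2 rest o s = c * fwd Obs Ptr z pi pre a1 rest o s.
Proof.
elim: rest pre a1 a2 => [|[o1 g1] r IH] pre a1 a2 E /=.
  by rewrite E mulrA.
apply: IH => s'; rewrite mulr_sumr; apply: eq_bigr => s0 _.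
by rewrite E !mulrA.
Qed.

Definition one_pol : policy R O G := fun _ _ => 1.

Fixpoint wgt (pi : policy R O G) (pre rest : seq (O * G)) : R :=
  match rest with
  | [::] => 1
  | (o1, g1) :: r => pi (pre, o1) g1 * wgt pi (rcons pre (o1, g1)) r
  end.

Lemma fwd_fact z (pi : policy R O G) pre alpha rest o s :
  fwd Obs Ptr z pi pre alpha rest o s =
  wgt pi pre rest * fwd Obs Ptr z one_pol pre alpha rest o s.
Proof.
elim: rest pre alpha => [|[o1 g1] r IH] pre alpha /=; first by rewrite mul1r.
rewrite IH (mulrC (pi _ _)) -mulrA; congr (_ * _).
apply: fwd_scale => s'; rewrite mulr_sumr; apply: eq_bigr => s0 _.
rewrite /one_pol mulr1; ring.
Qed.

Lemma law_fact (rho : S -> R) z pi tau :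
  law rho Obs Ptr z pi tau = wgt pi [::] tau.1 * law rho Obs Ptr z one_pol tau.
Proof. by rewrite /law mulr_sumr; apply: eq_bigr => s _; rewrite fwd_fact. Qed.

Lemma law_cross (rho : S -> R) z z' p1 p2 tau :
  law rho Obs Ptr z' p1 tau * law rho Obs Ptr z p2 tau =
  law rho Obs Ptr z' p2 tau * law rho Obs Ptr z p1 tau.
Proof. rewrite !(law_fact _ _ p1) !(law_fact _ _ p2); ring. Qed.

Lemma fwd_sum z (pi : policy R O G) n pre alpha :
  subpol pi -> (forall s, 0 <= alpha s) ->
  \sum_(p : n.-tuple (O * G)) \sum_(o : O) \sum_(s : S)
     fwd Obs Ptr z pi pre alpha (tval p) o s <= \sum_s alpha s.
Proof.
move=> [pi0 pi1]; elim: n pre alpha => [|n IH] pre alpha a0.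
  rewrite (@sum_tuple0 R _ (fun p => \sum_(o : O) \sum_(s : S)
     fwd Obs Ptr z pi pre alpha p o s)) /=.
  rewrite exchange_big /=; apply: ler_sum => s _.
  by rewrite -mulr_sumr (Obs_d s).2 mulr1.
rewrite (@sum_tupleS R _ n (fun p => \sum_(o : O) \sum_(s : S)
     fwd Obs Ptr z pi pre alpha p o s)) /=.
apply: le_trans (_ : \sum_(x : O * G) \sum_(s' : S) \sum_(s : S)
   alpha s * Obs s x.1 * pi (pre, x.1) x.2 * Ptr z (size pre) s x.2 s' <= _).
  apply: ler_sum => [[o1 g1]] _ /=.
  apply: IH => s'; apply: sumr_ge0 => s0 _.
  by rewrite !mulr_ge0 // ?(Obs_d _).1 ?(Ptr_d _ _ _ _).1.
rewrite (eq_bigr (fun x => \sum_(s:S) alpha s * Obs s x.1 * pi (pre, x.1) x.2)); last first.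
  move=> x _; rewrite exchange_big /=; apply: eq_bigr => s _.
  by rewrite -mulr_sumr (Ptr_d _ _ _ _).2 mulr1.
rewrite exchange_big /=.
apply: ler_sum => s _.
rewrite -(pair_bigA _ (fun o1 g1 => alpha s * Obs s o1 * pi (pre, o1) g1)) /=.
apply: le_trans (_ : \sum_(o1 : O) alpha s * Obs s o1 <= _); last first.
  by rewrite -mulr_sumr (Obs_d s).2 mulr1.
apply: ler_sum => o1 _; rewrite -mulr_sumr.
apply: ler_piMr; first by rewrite mulr_ge0 // (Obs_d s).1.
exact: pi1.
Qed.

Lemma law_sum (rho : S -> R) z pi n :
  isdist rho -> subpol pi ->
  \sum_(p : n.-tuple (O * G)) \sum_(o : O) law rho Obs Ptr z pi (tval p, o) <= 1.
Proof.
move=> [r0 r1] Hpi; rewrite -r1; exact: fwd_sum.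
Qed.

Lemma law_ge0 (rho : S -> R) z pi tau :
  isdist rho -> (forall t g, 0 <= pi t g) -> 0 <= law rho Obs Ptr z pi tau.
Proof. by move=> [r0 _] p0; apply: sumr_ge0 => s _; apply: fwd_ge0. Qed.

End Fwd.
Section OS.
Variable R : realType.

Lemma term_le (f g : R) : 0 <= f -> 0 <= g ->
  f * Num.sqrt (g / f) <= Num.sqrt f * Num.sqrt g.
Proof.
move=> f0 g0; have [->|fn0] := eqVneq f 0.
  by rewrite mul0r mulr_ge0 // sqrtr_ge0.
have sf0 : Num.sqrt f != 0 by rewrite sqrtr_eq0 -ltNge lt_def fn0 f0.
rewrite sqrtrM // sqrtrV // -{1}(sqr_sqrtr f0) expr2.
by rewrite le_eqVlt; apply/orP; left; apply/eqP; field.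
Qed.

Lemma S_exp_le (s : R) : 0 <= s -> s * expR (1 - s) <= 1.
Proof.
move=> s0.
have h1 : s <= expR (s - 1) by have := expR_ge1Dx (s - 1); rewrite addrC subrK.
have -> : 1 - s = - (s - 1) by ring.
apply: le_trans (_ : expR (s - 1) * expR (- (s - 1)) <= 1); last by rewrite expRxMexpNx_1.
exact: ler_pM s0 (expR_ge0 _) h1 (lexx _).
Qed.

Lemma one_step (I J : finType) (f g : I -> J -> R) :
  (forall i j, 0 <= f i j) -> (forall i j, 0 <= g i j) ->
  \sum_i \sum_j f i j <= 1 -> \sum_i \sum_j g i j <= 1 ->
  (\sum_i \sum_j f i j * Num.sqrt (g i j / f i j)) *
    expR (2^-1 * \sum_i \sum_j (Num.sqrt (f i j) - Num.sqrt (g i j)) ^+ 2) <= 1.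
Proof.
move=> f0 g0 f1 g1.
set S := \sum_i \sum_j Num.sqrt (f i j) * Num.sqrt (g i j).
have S0 : 0 <= S by do 2 (apply: sumr_ge0 => ? _); rewrite mulr_ge0 ?sqrtr_ge0.
have HE : \sum_i \sum_j (Num.sqrt (f i j) - Num.sqrt (g i j)) ^+ 2 =
   \sum_i \sum_j f i j + \sum_i \sum_j g i j - 2 * S.
  rewrite /S mulr_sumr -sumrN -!big_split /=; apply: eq_bigr => i _.
  rewrite mulr_sumr -sumrN -!big_split /=; apply: eq_bigr => j _.
  rewrite sqrrB !sqr_sqrtr //; ring.
rewrite HE.
apply: le_trans (_ : S * expR (1 - S) <= 1); last exact: S_exp_le.
apply: ler_pM; first by do 2 (apply: sumr_ge0 => ? _); rewrite mulr_ge0 ?sqrtr_ge0.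
- exact: expR_ge0.
- by do 2 (apply: ler_sum => ? _); apply: term_le.
- rewrite ler_expR; lra.
Qed.
End OS.

Section Det.
Variable R : realType.
Variable Z : finType.

Lemma det_term (p D r cZ M N : R) : 0 <= p -> p <= cZ * r ^+ 2 -> 0 <= r ->
  r * expR D <= M -> 0 < cZ -> 0 < M -> 0 < N ->
  D * p <= p * (ln M + 2^-1 * ln cZ + 2^-1 * ln N) + 2^-1 * (N^-1 - p).
Proof.
move=> p0 pr r0 rD c0 M0 N0.
have [->|pn0] := eqVneq p 0.
  rewrite mulr0 mul0r add0r subr0; apply: mulr_ge0; first lra.
  by rewrite invr_ge0 ltW.
have pp : 0 < p by rewrite lt_def pn0 p0.
have rp : 0 < r.
  rewrite lt_def r0 andbT; apply/eqP => r00; move: pr.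
  rewrite r00 expr2 !mulr0 => h0.
  by have := lt_le_trans pp h0; rewrite ltxx.
have e1 : expR D <= M / r by rewrite ler_pdivlMr // mulrC.
have hD : D <= ln M - ln r.
  have e2 : ln (expR D) <= ln (M / r).
    by rewrite ler_ln ?posrE ?expR_gt0 ?divr_gt0.
  by rewrite expRK ln_div ?posrE // in e2.
have hp : ln p <= ln cZ + ln r *+ 2.
  have e3 : ln p <= ln (cZ * r ^+ 2).
    by rewrite ler_ln ?posrE ?mulr_gt0 ?exprn_gt0.
  by rewrite lnM ?posrE ?exprn_gt0 // lnXn // in e3.
have qp : 0 < (p * N)^-1 by rewrite invr_gt0 mulr_gt0.
have hl : - (ln p + ln N) <= (p * N)^-1 - 1.
  have hl0 := @le_ln1Dx R ((p * N)^-1 - 1).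
  have e4 : 1 + ((p * N)^-1 - 1) = (p * N)^-1 by ring.
  rewrite e4 lnV ?posrE ?mulr_gt0 // lnM ?posrE // in hl0.
  apply: hl0; lra.
have pq : p * (p * N)^-1 = N^-1.
  by rewrite invfM mulrA divff // mul1r.
rewrite mulr2n in hp.
nra.
Qed.

Lemma det (p D r : Z -> R) cZ M :
  (0 < #|Z|)%N ->
  (forall x, 0 <= p x) -> \sum_x p x = 1 ->
  (forall x, p x <= cZ * r x ^+ 2) -> (forall x, 0 <= r x) ->
  (forall x, r x * expR (D x) <= M) -> 0 < cZ -> 0 < M ->
  \sum_x D x * p x <= ln M + 2^-1 * ln cZ + 2^-1 * ln (#|Z|%:R).
Proof.
move=> NZ p0 p1 pr r0 rD c0 M0.
have N0 : 0 < (#|Z|%:R : R) by rewrite ltr0n.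
apply: le_trans (_ : \sum_x (p x * (ln M + 2^-1 * ln cZ + 2^-1 * ln (#|Z|%:R))
   + 2^-1 * ((#|Z|%:R)^-1 - p x)) <= _).
  by apply: ler_sum => x _; apply: det_term.
rewrite big_split /= -mulr_suml p1 mul1r -mulr_sumr sumrB sumr_const p1.
have -> : ((#|Z|%:R)^-1 *+ #|Z| : R) = 1.
  by rewrite -(mulr_natr ((#|Z|%:R : R)^-1)) mulVf ?gt_eqF.
by rewrite subrr mulr0 addr0.
Qed.
End Det.

Section Main.
Variable R : realType.
Variables (Z S O G W : finType).
Variable H : nat.
Variable rho : S -> R.
Variable Obs : S -> O -> R.
Variable Ptr : Z -> nat -> S -> G -> S -> R.
Variable PZ : Z -> R.
Variable PW : W -> R.
Variable pib : W -> policy R O G.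
Variable pistar : Z -> W -> policy R O G.
Variable piexp : policy R O G.
Variable eps : R.
Variable z : Z.
Variable h : nat.
Hypothesis rho_d : isdist rho.
Hypothesis Obs_d : forall s, isdist (Obs s).
Hypothesis Ptr_d : forall z0 k s g, isdist (Ptr z0 k s g).
Hypothesis PZ_d : isdist PZ.
Hypothesis PW_d : isdist PW.
Hypothesis pib_d : forall om tau, isdist (pib om tau).
Hypothesis pistar_d : forall z0 om tau, isdist (pistar z0 om tau).
Hypothesis piexp_d : forall tau, isdist (piexp tau).
Hypothesis eps01 : 0 <= eps <= 1.

Local Notation pp := (plan_pol rho Obs Ptr PZ PW pib pistar piexp).
Local Notation lw := (law rho Obs Ptr).
Local Notation hist_t := (seq (W * bool * Traj O G)).

Lemma lw_ge0 z0 om tau : 0 <= lw z0 (pib om) tau.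
Proof. by apply: law_ge0 => // t g; exact: (pib_d _ _).1. Qed.

Lemma PD_ge0 z0 hs om tau : 0 <= PD_joint rho Obs Ptr PZ PW pib z0 hs om tau.
Proof.
rewrite /PD_joint; rewrite !mulr_ge0 ?PZ_d.1 ?PW_d.1 ?lw_ge0 //.
by apply: prodr_ge0 => e _; rewrite mulr_ge0 ?PW_d.1 ?lw_ge0.
Qed.

Lemma pp_sub hist om b : subpol (pp hist om b).
Proof.
case: b => /=; first by split=> [t g|t]; rewrite ?(piexp_d t).1 ?(piexp_d t).2.
split=> [t g|t]; rewrite /LLM.
  rewrite divr_ge0 //; last by apply: sumr_ge0 => z0 _; apply: PD_ge0.
  by apply: sumr_ge0 => z0 _; rewrite mulr_ge0 ?PD_ge0 ?(pistar_d _ _ _).1.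
rewrite -mulr_suml exchange_big /=.
under eq_bigr => z0 _ do rewrite -mulr_sumr (pistar_d _ _ _).2 mulr1.
set D := \sum_(i : Z) _.
have [->|Dn0] := eqVneq D 0; first by rewrite mul0r.
by rewrite divff.
Qed.

Definition stepE m (hist : hist_t) (K : W -> bool -> Traj O G -> R) : R :=
  \sum_(om : W) \sum_(b : bool) \sum_(p : m.-tuple (O * G)) \sum_(o : O)
      PW om * coin eps b * lw z (pp hist om b) (tval p, o) * K om b (tval p, o).

Fixpoint EV (F : hist_t -> W -> bool -> Traj O G -> R) n (hist : hist_t) : R :=
  match n with
  | 0 => stepE h.-1 hist (F hist)
  | n'.+1 => stepE H.-1 hist (fun om b tau => EV F n' (rcons hist (om, b, tau)))
  end.

Lemma fail_EV bound n hist :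
  fail_prob H rho Obs Ptr PZ PW pib pistar piexp eps z h bound n hist =
  EV (fun hist om b tau =>
        if bound < lhs H rho Obs Ptr PZ PW pib pistar piexp z h hist om b tau
        then 1 else 0) n hist.
Proof.
elim: n hist => [|n IH] hist //=.
rewrite /stepE; do 4 (apply: eq_bigr => ? _); by rewrite IH.
Qed.

Lemma coin_ge0 b : 0 <= coin eps b.
Proof. by case: b => /=; case/andP: eps01 => e0 e1; lra. Qed.

Lemma pp_ge0 hist om b t g : 0 <= pp hist om b t g.
Proof. exact: (pp_sub hist om b).1. Qed.

Lemma lwpp_ge0 z0 hist om b tau : 0 <= lw z0 (pp hist om b) tau.
Proof. by apply: law_ge0 => // t g; exact: pp_ge0. Qed.

Lemma stepE_le m hist K1 K2 :
  (forall om b tau, 0 < PW om -> 0 < lw z (pp hist om b) tau ->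
     K1 om b tau <= K2 om b tau) ->
  stepE m hist K1 <= stepE m hist K2.
Proof.
move=> HK; rewrite /stepE.
apply: ler_sum => om _; apply: ler_sum => b _; apply: ler_sum => p _.
apply: ler_sum => o _.
have [P0|Pp] := eqVneq (PW om) 0; first by rewrite P0 !mul0r.
set l := lw z _ _.
have [l0|lp] := eqVneq l 0; first by rewrite l0 !mulr0 !mul0r.
apply: ler_wpM2l; first by rewrite !mulr_ge0 ?PW_d.1 ?coin_ge0 ?lwpp_ge0.
apply: HK; first by rewrite lt_def Pp PW_d.1.
by rewrite lt_def lp lwpp_ge0.
Qed.

Lemma stepE_sum m hist (K : Z -> W -> bool -> Traj O G -> R) :
  stepE m hist (fun om b tau => \sum_(i : Z) K i om b tau) =
  \sum_(i : Z) stepE m hist (K i).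
Proof.
rewrite /stepE.
under eq_bigr => om _ do under eq_bigr => b _ do under eq_bigr => p _ do
  (under eq_bigr => o _ do rewrite mulr_sumr; rewrite exchange_big).
under eq_bigr => om _ do under eq_bigr => b _ do rewrite exchange_big.
under eq_bigr => om _ do rewrite exchange_big.
by rewrite exchange_big.
Qed.

Lemma stepE_scale m hist c K :
  stepE m hist (fun om b tau => c * K om b tau) = c * stepE m hist K.
Proof.
rewrite /stepE mulr_sumr; apply: eq_bigr => om _; rewrite mulr_sumr.
apply: eq_bigr => b _; rewrite mulr_sumr; apply: eq_bigr => p _; rewrite mulr_sumr.
by apply: eq_bigr => o _; rewrite mulrCA.
Qed.

Lemma stepE_one m hist z' :
  stepE m hist (fun om b tau =>
     Num.sqrt (lw z' (pp hist om b) tau / lw z (pp hist om b) tau) *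
     expR (hell2 m (lw z (pp hist om b)) (lw z' (pp hist om b)))) <= 1.
Proof.
rewrite /stepE.
apply: le_trans (_ : \sum_(om : W) \sum_(b : bool) PW om * coin eps b <= 1).
  apply: ler_sum => om _; apply: ler_sum => b _.
  rewrite (eq_bigr (fun p => PW om * coin eps b *
     \sum_(o : O) lw z (pp hist om b) (tval p, o) *
     (Num.sqrt (lw z' (pp hist om b) (tval p, o) / lw z (pp hist om b) (tval p, o)) *
      expR (hell2 m (lw z (pp hist om b)) (lw z' (pp hist om b)))))); last first.
    by move=> p _; rewrite mulr_sumr; apply: eq_bigr => o _; rewrite mulrA.
  rewrite -mulr_sumr; apply: ler_piMr; first by rewrite mulr_ge0 ?PW_d.1 ?coin_ge0.
  under eq_bigr => p _ do under eq_bigr => o _ do rewrite mulrA.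
  under eq_bigr => p _ do rewrite -mulr_suml.
  rewrite -mulr_suml.
  apply: (one_step (f := fun p o => lw z (pp hist om b) (tval p, o))
                   (g := fun p o => lw z' (pp hist om b) (tval p, o))).
  - by move=> p o; apply: lwpp_ge0.
  - by move=> p o; apply: lwpp_ge0.
  - by apply: law_sum => //; apply: pp_sub.
  - by apply: law_sum => //; apply: pp_sub.
rewrite (eq_bigr (fun om => PW om)) ?PW_d.2 // => om _.
rewrite big_bool /= -mulrDr; lra.
Qed.

Local Notation hs := (hsum H rho Obs Ptr PZ PW pib pistar piexp z).

Definition ratio z' (pre : hist_t) (e : W * bool * Traj O G) : R :=
  Num.sqrt (lw z' (pp pre e.1.1 e.1.2) e.2 / lw z (pp pre e.1.1 e.1.2) e.2).

Fixpoint Rat z' (pre rest : hist_t) : R :=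
  match rest with
  | [::] => 1
  | e :: r => ratio z' pre e * Rat z' (rcons pre e) r
  end.

Fixpoint goodp (pre rest : hist_t) : Prop :=
  match rest with
  | [::] => True
  | e :: r => 0 < lw z (pp pre e.1.1 e.1.2) e.2 /\ goodp (rcons pre e) r
  end.

Lemma Rat_rcons z' pre rest e :
  Rat z' pre (rcons rest e) = Rat z' pre rest * ratio z' (pre ++ rest) e.
Proof.
elim: rest pre => [|x r IH] pre /=; first by rewrite cats0 mul1r mulr1.
by rewrite IH mulrA cat_rcons.
Qed.

Lemma hsum_rcons z' pre rest e :
  hs z' pre (rcons rest e) = hs z' pre rest +
    hell2 H.-1 (lw z (pp (pre ++ rest) e.1.1 e.1.2))
               (lw z' (pp (pre ++ rest) e.1.1 e.1.2)).
Proof.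
elim: rest pre => [|x r IH] pre /=; first by rewrite cats0 add0r addr0.
by rewrite IH addrA cat_rcons.
Qed.

Lemma goodp_rcons pre rest e :
  goodp pre rest -> 0 < lw z (pp (pre ++ rest) e.1.1 e.1.2) e.2 ->
  goodp pre (rcons rest e).
Proof.
elim: rest pre => [|x r IH] pre /=; first by rewrite cats0.
by move=> [h1 h2] h3; split=> //; apply: IH => //; rewrite cat_rcons.
Qed.

Lemma Rat_ge0 z' pre rest : 0 <= Rat z' pre rest.
Proof.
by elim: rest pre => [|x r IH] pre //=; rewrite mulr_ge0 ?sqrtr_ge0.
Qed.

Definition Psi z' (hist : hist_t) := Rat z' [::] hist * expR (hs z' [::] hist).

Definition F2 c (hist : hist_t) om b tau : R :=
  \sum_(z' : Z) c * (Psi z' hist *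
     (Num.sqrt (lw z' (pp hist om b) tau / lw z (pp hist om b) tau) *
      expR (hell2 h.-1 (lw z (pp hist om b)) (lw z' (pp hist om b))))).

Lemma Psi_rcons z' hist om b tau :
  Psi z' (rcons hist (om, b, tau)) = Psi z' hist *
     (Num.sqrt (lw z' (pp hist om b) tau / lw z (pp hist om b) tau) *
      expR (hell2 H.-1 (lw z (pp hist om b)) (lw z' (pp hist om b)))).
Proof.
rewrite /Psi Rat_rcons hsum_rcons expRD /ratio /=; ring.
Qed.


Lemma mart c n hist : 0 <= c ->
  EV (F2 c) n hist <= \sum_(z' : Z) c * Psi z' hist.
Proof.
move=> c0; elim: n hist => [|n IH] hist /=.
  rewrite /F2 (stepE_sum _ _ (fun z' om b tau => c * (Psi z' hist *
     (Num.sqrt (lw z' (pp hist om b) tau / lw z (pp hist om b) tau) *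
      expR (hell2 h.-1 (lw z (pp hist om b)) (lw z' (pp hist om b))))))).
  apply: ler_sum => z' _.
  rewrite (stepE_scale _ _ _ (fun om b tau => Psi z' hist *
     (Num.sqrt (lw z' (pp hist om b) tau / lw z (pp hist om b) tau) *
      expR (hell2 h.-1 (lw z (pp hist om b)) (lw z' (pp hist om b)))))).
  rewrite (stepE_scale _ _ _ (fun om b tau =>
     (Num.sqrt (lw z' (pp hist om b) tau / lw z (pp hist om b) tau) *
      expR (hell2 h.-1 (lw z (pp hist om b)) (lw z' (pp hist om b)))))).
  apply: ler_wpM2l => //; apply: ler_piMr; last exact: stepE_one.
  by rewrite /Psi mulr_ge0 ?Rat_ge0 ?expR_ge0.
apply: le_trans (_ : stepE H.-1 hist (fun om b tau =>
   \sum_(z' : Z) c * (Psi z' hist *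
     (Num.sqrt (lw z' (pp hist om b) tau / lw z (pp hist om b) tau) *
      expR (hell2 H.-1 (lw z (pp hist om b)) (lw z' (pp hist om b)))))) <= _).
  apply: stepE_le => om b tau _ _; apply: le_trans (IH _) _.
  by apply: ler_sum => z' _; rewrite Psi_rcons.
rewrite (stepE_sum _ _ (fun z' om b tau => c * (Psi z' hist *
     (Num.sqrt (lw z' (pp hist om b) tau / lw z (pp hist om b) tau) *
      expR (hell2 H.-1 (lw z (pp hist om b)) (lw z' (pp hist om b))))))).
apply: ler_sum => z' _.
rewrite (stepE_scale _ _ _ (fun om b tau => Psi z' hist *
   (Num.sqrt (lw z' (pp hist om b) tau / lw z (pp hist om b) tau) *
    expR (hell2 H.-1 (lw z (pp hist om b)) (lw z' (pp hist om b)))))).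
rewrite (stepE_scale _ _ _ (fun om b tau =>
   (Num.sqrt (lw z' (pp hist om b) tau / lw z (pp hist om b) tau) *
    expR (hell2 H.-1 (lw z (pp hist om b)) (lw z' (pp hist om b)))))).
apply: ler_wpM2l => //; apply: ler_piMr; last exact: stepE_one.
by rewrite /Psi mulr_ge0 ?Rat_ge0 ?expR_ge0.
Qed.


Lemma EV_le (F1 F3 : hist_t -> W -> bool -> Traj O G -> R) n hist :
  goodp [::] hist ->
  (forall hist om b tau, goodp [::] hist -> 0 < PW om ->
     0 < lw z (pp hist om b) tau -> F1 hist om b tau <= F3 hist om b tau) ->
  EV F1 n hist <= EV F3 n hist.
Proof.
move=> gh HF; elim: n hist gh => [|n IH] hist gh /=.
  by apply: stepE_le => om b tau P l; apply: HF.
apply: stepE_le => om b tau P l; apply: IH.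
by apply: (goodp_rcons (pre := [::])).
Qed.

Lemma single_le (T : finType) (F : T -> R) i :
  (forall j, 0 <= F j) -> F i <= \sum_j F j.
Proof.
by move=> F0; rewrite (bigD1 i) //= lerDl sumr_ge0.
Qed.

Lemma cur_ratio z' om pi tau : (forall t g, 0 <= pi t g) ->
  0 < lw z pi tau ->
  lw z' (pib om) tau = lw z (pib om) tau * (lw z' pi tau / lw z pi tau).
Proof.
move=> p0 lp.
have E := @law_cross R Z S O G Obs Ptr rho z z' (pib om) pi tau.
by rewrite mulrA (mulrC (lw z _ _)) -E mulfK // gt_eqF.
Qed.

Lemma prod_ratio z' pre rest : goodp pre rest ->
  \prod_(e <- strip rest) (PW e.1 * lw z' (pib e.1) e.2) =
  \prod_(e <- strip rest) (PW e.1 * lw z (pib e.1) e.2) * Rat z' pre rest ^+ 2.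
Proof.
elim: rest pre => [|e r IH] pre /=; first by move=> _; rewrite !big_nil expr1n mulr1.
move=> [lp gr]; rewrite !big_cons (IH _ gr) /ratio.
rewrite (cur_ratio z' e.1.1 (@pp_ge0 pre e.1.1 e.1.2) lp).
rewrite exprMn sqr_sqrtr ?divr_ge0 ?lwpp_ge0 //; ring.
Qed.

Definition rr z' hist om b tau :=
  Rat z' [::] hist * Num.sqrt (lw z' (pp hist om b) tau / lw z (pp hist om b) tau).

Lemma post_le cZ hist om b tau z' :
  0 <= cZ -> (forall z1 z2 : Z, PZ z2 <= cZ * PZ z1) ->
  goodp [::] hist -> 0 < lw z (pp hist om b) tau ->
  post rho Obs Ptr PZ PW pib z' (strip hist) om tau <= cZ * rr z' hist om b tau ^+ 2.
Proof.
move=> c0 cov gh lp.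
set K := \prod_(e <- strip hist) (PW e.1 * lw z (pib e.1) e.2) *
         (PW om * lw z (pib om) tau).
have K0 : 0 <= K.
  by rewrite mulr_ge0 ?prodr_ge0 // => *; rewrite ?mulr_ge0 ?PW_d.1 ?lw_ge0.
have EPD : forall z1, PD_joint rho Obs Ptr PZ PW pib z1 (strip hist) om tau =
   PZ z1 * K * rr z1 hist om b tau ^+ 2.
  move=> z1; rewrite /PD_joint (prod_ratio z1 gh) /K /rr.
  rewrite (cur_ratio z1 om (@pp_ge0 hist om b) lp).
  rewrite exprMn sqr_sqrtr ?divr_ge0 ?lwpp_ge0 //; ring.
have Ez : PD_joint rho Obs Ptr PZ PW pib z (strip hist) om tau = PZ z * K.
  rewrite /PD_joint /K; ring.
have r20 : 0 <= rr z' hist om b tau ^+ 2 by rewrite exprn_ge0 // mulr_ge0 ?Rat_ge0 ?sqrtr_ge0.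
rewrite /post; set Sg := \sum_(z'' : Z) _.
have Sg0 : 0 <= Sg by apply: sumr_ge0 => *; apply: PD_ge0.
have [->|Sn0] := eqVneq Sg 0; first by rewrite invr0 mulr0 mulr_ge0.
have Sp : 0 < Sg by rewrite lt_def Sn0.
rewrite ler_pdivrMr // EPD.
apply: le_trans (_ : cZ * PZ z * K * rr z' hist om b tau ^+ 2 <= _).
  by apply: ler_wpM2r => //; apply: ler_wpM2r => //; apply: cov.
have : PZ z * K <= Sg by rewrite -Ez; apply: (single_le (F := fun z1 => PD_joint rho Obs Ptr PZ PW pib z1 (strip hist) om tau)) => j; apply: PD_ge0.
move=> h1; have := ler_wpM2l (mulr_ge0 c0 r20) h1; rewrite !mulrA.
apply: le_trans; rewrite le_eqVlt; apply/orP; left; apply/eqP; ring.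
Qed.


Lemma term_bound cZ delta hist om b tau :
  1 <= cZ -> (forall z1 z2 : Z, PZ z2 <= cZ * PZ z1) -> 0 < delta < 1 ->
  goodp [::] hist -> 0 < lw z (pp hist om b) tau ->
  (if 2 * ln (cZ * #|Z|%:R / delta) <
      lhs H rho Obs Ptr PZ PW pib pistar piexp z h hist om b tau then 1 else 0)
  <= F2 (delta / #|Z|%:R) hist om b tau.
Proof.
move=> c1 cov /andP[d0 d1] gh lp.
have NZ : (0 < #|Z|)%N by apply/card_gt0P; exists z.
set N := (#|Z|%:R : R).
have N1 : 1 <= N by rewrite /N ler1n.
have N0 : 0 < N by lra.
have c0 : 0 < cZ by lra.
have F20 : 0 <= F2 (delta / N) hist om b tau.
  apply: sumr_ge0 => z' _; rewrite /Psi !mulr_ge0 ?divr_ge0 ?Rat_ge0 ?expR_ge0 ?sqrtr_ge0 ?invr_ge0 ?(ltW d0) ?(ltW N0) //.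
case: ifP => [hB|_] //.
rewrite leNgt; apply/negP => hF.
pose D z' := hs z' [::] hist + hell2 h.-1 (lw z (pp hist om b)) (lw z' (pp hist om b)).
have hr : forall z', rr z' hist om b tau * expR (D z') <= N / delta.
  move=> z'.
  have h1 := @single_le Z (fun z1 => delta / N * (Psi z1 hist *
     (Num.sqrt (lw z1 (pp hist om b) tau / lw z (pp hist om b) tau) *
      expR (hell2 h.-1 (lw z (pp hist om b)) (lw z1 (pp hist om b)))))) z'.
  have h2 := le_lt_trans (h1 _) hF.
  have -> : rr z' hist om b tau * expR (D z') = Psi z' hist *
     (Num.sqrt (lw z' (pp hist om b) tau / lw z (pp hist om b) tau) *
      expR (hell2 h.-1 (lw z (pp hist om b)) (lw z' (pp hist om b)))).
    by rewrite /Psi /rr /D expRD; ring.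
  move: h2; rewrite mulrAC ltr_pdivrMr // mul1r => h2.
  rewrite ler_pdivlMr //; apply: ltW; rewrite mulrC; apply: h2.
  move=> j; rewrite /Psi !mulr_ge0 ?divr_ge0 ?Rat_ge0 ?expR_ge0 ?sqrtr_ge0 ?invr_ge0 ?(ltW d0) ?(ltW N0) //.
move: hB; apply/negP; rewrite -leNgt.
set Sg := \sum_(z'' : Z) PD_joint rho Obs Ptr PZ PW pib z'' (strip hist) om tau.
have Sg0 : 0 <= Sg by apply: sumr_ge0 => *; apply: PD_ge0.
have Bge : ln (N / delta) + 2^-1 * ln cZ + 2^-1 * ln N <= 2 * ln (cZ * N / delta).
  rewrite !ln_div ?posrE ?mulr_gt0 // lnM ?posrE //.
  have : 0 <= ln cZ by apply: ln_ge0.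
  have : 0 <= ln N by apply: ln_ge0.
  have : ln delta < 0 by apply: ln_lt0; rewrite d0 d1.
  lra.
have [S0|Sn0] := eqVneq Sg 0.
  rewrite /lhs big1 => [|z' _]; last first.
    by rewrite /post -/Sg S0 invr0 !mulr0.
  apply: le_trans Bge.
  rewrite -addrA addr_ge0 ?addr_ge0 ?mulr_ge0 ?ln_ge0 ?invr_ge0 //; try lra.
  by rewrite ler_pdivlMr // mul1r; lra.
apply: le_trans Bge.
have := @det R Z (fun z' => post rho Obs Ptr PZ PW pib z' (strip hist) om tau) D
  (fun z' => rr z' hist om b tau) cZ (N / delta) NZ.
apply.
- by move=> z'; rewrite /post divr_ge0 ?PD_ge0.
- by rewrite /post -mulr_suml -/Sg divff.
- by move=> z'; apply: post_le => //; lra.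
- by move=> z'; rewrite mulr_ge0 ?Rat_ge0 ?sqrtr_ge0.
- exact: hr.
- exact: c0.
- by rewrite divr_gt0.
Qed.


Lemma final cZ delta t :
  1 <= cZ -> (forall z1 z2 : Z, PZ z2 <= cZ * PZ z1) -> 0 < delta < 1 ->
  fail_prob H rho Obs Ptr PZ PW pib pistar piexp eps z h
    (2 * ln (cZ * #|Z|%:R / delta)) t [::] <= delta.
Proof.
move=> c1 cov d01.
have NZ : (0 < #|Z|)%N by apply/card_gt0P; exists z.
rewrite fail_EV.
apply: (@le_trans _ _ (EV (F2 (delta / #|Z|%:R)) t [::])).
  by apply: EV_le => // hist om b tau gh _ lp; apply: term_bound.
apply: le_trans (mart _ _ _) _.
  by rewrite divr_ge0 ?ler0n //; case/andP: d01 => d0 _; apply: ltW.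
rewrite (eq_bigr (fun _ => delta / #|Z|%:R)) => [|z' _]; last first.
  by rewrite /Psi /= expR0 !mulr1.
rewrite sumr_const -(mulr_natr (delta / #|Z|%:R)) mulfVK // pnatr_eq0 -lt0n //.
Qed.

End Main.

Unset Implicit Arguments.

Theorem lemma1 (R : realType) (Z S O G W : finType) (H T : nat)
  (rho : S -> R) (Obs : S -> O -> R) (Ptr : Z -> nat -> S -> G -> S -> R)
  (PZ : Z -> R) (PW : W -> R) (pib : W -> policy R O G)
  (pistar : Z -> W -> policy R O G) (piexp : policy R O G)
  (eps cZ delta : R) (z : Z) (h t : nat) :
  isdist rho ->
  (forall s, isdist (Obs s)) ->
  (forall z0 k s g, isdist (Ptr z0 k s g)) ->
  isdist PZ -> isdist PW ->
  (forall om tau, isdist (pib om tau)) ->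
  (forall z0 om tau, isdist (pistar z0 om tau)) ->
  (forall tau, isdist (piexp tau)) ->
  0 <= eps <= 1 ->
  (* prior coverage: sup_{z,z'} PZ z' / PZ z <= cZ *)
  (forall z1 z2 : Z, PZ z2 <= cZ * PZ z1) ->
  0 < delta < 1 ->
  (1 <= h <= H)%N -> (1 <= t <= T)%N ->
  fail_prob H rho Obs Ptr PZ PW pib pistar piexp eps z h
    (2 * ln (cZ * #|Z|%:R / delta)) t.-1 [::] <= delta.
Proof.
move=> rho_d Obs_d Ptr_d PZ_d PW_d pib_d pistar_d piexp_d eps01 cov d01 _ _.
have PZz : 0 < PZ z.
  rewrite lt_def PZ_d.1 andbT; apply/eqP => P0.
  have : \sum_(x : Z) PZ x <= \sum_(x : Z) 0.
    by apply: ler_sum => x _; have := cov z x; rewrite P0 mulr0.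
  rewrite big1_eq PZ_d.2; lra.
have c1 : 1 <= cZ.
  by have := cov z z; rewrite -{1}(mul1r (PZ z)) ler_pM2r.
by apply: final.
Qed.
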